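(* Let $\mathcal{G}\rightrightarrows M$ be a Lie groupoid and let $\overline{(\mathcal{G},\mathcal{G})}$ be the closure in $\mathcal{G}$ of $(\mathcal{G},\mathcal{G})=\bigcup_{x\in M}(\mathcal{G}_x,\mathcal{G}_x)$. If $\overline{(\mathcal{G},\mathcal{G})}$ is a subgroupoid of $\mathcal{G}$, then it is a normal subgroupoid, i.e. $h\,g\,h^{-1}\in\overline{(\mathcal{G},\mathcal{G})}$ for all $g\in\overline{(\mathcal{G},\mathcal{G})}$ and $h\in\mathcal{G}$ with $s(h)=t(g)$.
   Context: $\mathcal{G}_x=s^{-1}(x)\cap t^{-1}(x)$ is the isotropy group at $x$ and $(\mathcal{G}_x,\mathcal{G}_x)$ its commutator subgroup. Lie groupoids need not have Hausdorff arrow space; $s,t$ are submersions. *)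

(* Defs.v *)
From HB Require Import structures.
From mathcomp Require Import all_boot all_order all_algebra.
From mathcomp Require Import all_classical all_reals all_analysis.
Set Implicit Arguments. Unset Strict Implicit. Unset Printing Implicit Defensive.
Local Open Scope classical_set_scope.

(* A groupoid G ⇉ M with source s, target t, units u, inverse inv and
   composition mul g h = g h, defined (meaningfully) when s g = t h. *)
Record groupoid (G M : Type) := Groupoid {
  gs : G -> M;
  gt : G -> M;
  gu : M -> G;
  ginv : G -> G;
  gmul : G -> G -> G;
  gs_u : forall x, gs (gu x) = x;
  gt_u : forall x, gt (gu x) = x;
  gs_mul : forall g h, gs g = gt h -> gs (gmul g h) = gs h;
  gt_mul : forall g h, gs g = gt h -> gt (gmul g h) = gt g;
  gmulA : forall f g h, gs f = gt g -> gs g = gt h ->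
    gmul f (gmul g h) = gmul (gmul f g) h;
  gmul_u_l : forall g, gmul (gu (gt g)) g = g;
  gmul_u_r : forall g, gmul g (gu (gs g)) = g;
  gs_inv : forall g, gs (ginv g) = gt g;
  gt_inv : forall g, gt (ginv g) = gs g;
  gmulVg : forall g, gmul (ginv g) g = gu (gs g);
  gmulgV : forall g, gmul g (ginv g) = gu (gt g)
}.

Definition has_local_sections (G M : topologicalType) (f : G -> M) : Prop :=
  forall g : G, exists (U : set M) (sigma : M -> G),
    [/\ open U, U (f g), {within U, continuous sigma}, sigma (f g) = g &
        forall y, U y -> f (sigma y) = y].

(* A "Lie-type" topological groupoid: all structure maps continuous,
   composition continuous on composable pairs, M Hausdorff, and s, t admit
   local continuous sections (as submersions do).  G need not be Hausdorff. *)
Record lie_type_groupoid (G M : topologicalType) := LieTypeGroupoid {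
  lg :> groupoid G M;
  lg_hausM : hausdorff_space M;
  lg_cont_s : continuous (gs lg);
  lg_cont_t : continuous (gt lg);
  lg_cont_u : continuous (gu lg);
  lg_cont_inv : continuous (ginv lg);
  lg_cont_mul : {within [set p : G * G | gs lg p.1 = gt lg p.2],
                   continuous (fun p : G * G => gmul lg p.1 p.2)};
  lg_sections_s : has_local_sections (gs lg);
  lg_sections_t : has_local_sections (gt lg)
}.

Section Comm.
Variables (G M : Type) (GG : groupoid G M).

Definition isotropy (x : M) : set G := [set g | gs GG g = x /\ gt GG g = x].

Definition gcomm (a b : G) : G :=
  gmul GG (gmul GG (gmul GG a b) (ginv GG a)) (ginv GG b).

Inductive in_comm_subgroup (x : M) : G -> Prop :=
| ics_unit : in_comm_subgroup x (gu GG x)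
| ics_step : forall a b g, isotropy x a -> isotropy x b ->
    in_comm_subgroup x g -> in_comm_subgroup x (gmul GG (gcomm a b) g).

Definition comm_all : set G := \bigcup_(x in [set: M]) (in_comm_subgroup x).
End Comm.

(* Main.v *)
Require Import Defs.
From mathcomp Require Import all_boot all_order all_algebra.
From mathcomp Require Import all_classical all_reals all_analysis.
Local Open Scope classical_set_scope.

Ltac gsolve :=
  repeat match goal with
  | |- context [gs ?GG (gmul ?GG ?g ?h)] => rewrite (@gs_mul _ _ GG g h ltac:(gsolve))
  | |- context [gt ?GG (gmul ?GG ?g ?h)] => rewrite (@gt_mul _ _ GG g h ltac:(gsolve))
  | |- context [gs ?GG (ginv ?GG ?g)] => rewrite (@gs_inv _ _ GG g)
  | |- context [gt ?GG (ginv ?GG ?g)] => rewrite (@gt_inv _ _ GG g)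
  | |- context [gs ?GG (gu ?GG ?g)] => rewrite (@gs_u _ _ GG g)
  | |- context [gt ?GG (gu ?GG ?g)] => rewrite (@gt_u _ _ GG g)
  end; congruence.

Ltac assoc GG f g h := rewrite (@gmulA _ _ GG f g h ltac:(gsolve) ltac:(gsolve)).
Ltac assocr GG f g h := rewrite -(@gmulA _ _ GG f g h ltac:(gsolve) ltac:(gsolve)).

Section A.
Variables (G M : Type) (GG : groupoid G M).
Local Notation m := (gmul GG).
Local Notation i := (ginv GG).
Local Notation s := (gs GG).
Local Notation t := (gt GG).

Definition conj k a := m (m k a) (i k).

Lemma inv_uniq g h : s g = t h -> m g h = gu GG (s h) -> g = i h.
Proof.
move=> sgth E.
rewrite -[g](gmul_u_r GG) sgth -(gmulgV GG h).
assoc GG g h (i h); rewrite E.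
by rewrite -(gt_inv GG h) gmul_u_l.
Qed.

Lemma conjM k a b : s a = s k -> t a = s k -> s b = s k -> t b = s k ->
  conj k (m a b) = m (conj k a) (conj k b).
Proof.
move=> *; rewrite /conj.
assocr GG (m k a) (i k) (m (m k b) (i k)).
assoc GG (i k) (m k b) (i k).
assoc GG (i k) k b.
rewrite gmulVg.
have -> : gu GG (s k) = gu GG (t b) by congruence.
rewrite gmul_u_l. assoc GG (m k a) b (i k).
by assocr GG k a b.
Qed.

Lemma conjV k a : s a = s k -> t a = s k -> conj k (i a) = i (conj k a).
Proof.
move=> *; apply: inv_uniq; first by rewrite /conj; gsolve.
rewrite -conjM; try gsolve.
rewrite gmulVg /conj.
have -> : gu GG (s a) = gu GG (s k) by congruence.
idtac.
rewrite gmul_u_r gmulgV; congr (gu GG); gsolve.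
Qed.

Lemma conj_comm k a b : s a = s k -> t a = s k -> s b = s k -> t b = s k ->
  conj k (gcomm GG a b) = gcomm GG (conj k a) (conj k b).
Proof.
move=> *; rewrite /gcomm.
rewrite !conjM ?conjV //; gsolve.
Qed.

Lemma ics_iso {x g} : in_comm_subgroup GG x g -> s g = x /\ t g = x.
Proof.
elim=> [|a b g' [? ?] [? ?] _ [? ?]]; first by rewrite gs_u gt_u.
rewrite /gcomm; split; gsolve.
Qed.

Lemma ics_conj k g : in_comm_subgroup GG (s k) g ->
  in_comm_subgroup GG (t k) (conj k g).
Proof.
elim=> [|a b g' [? ?] [? ?] H IH].
  rewrite /conj.
  have -> : m k (gu GG (s k)) = k by rewrite gmul_u_r.
  by rewrite gmulgV; constructor.
have [? ?] := ics_iso H.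
rewrite conjM; try (rewrite /gcomm; gsolve).
rewrite conj_comm //; constructor => //; rewrite /isotropy /conj /=; split; gsolve.
Qed.
End A.
Arguments ics_iso {G M GG x g}.
Arguments conj {G M}.
Arguments ics_conj {G M GG}.
Lemma mulnbhs {G M : topologicalType} {GG : lie_type_groupoid G M} {a b V} :
  gs GG a = gt GG b -> nbhs (gmul GG a b) V ->
  exists A B, [/\ nbhs a A, nbhs b B & forall a' b', A a' -> B b' -> gs GG a' = gt GG b' -> V (gmul GG a' b')].
Proof.
move=> sab nV.
have := (subspace_continuousP _ _).1 (@lg_cont_mul _ _ GG) (a, b) sab V nV.
rewrite /= nbhs_simpl /=.
case=> [[A B] /= [nA nB] sub].
exists A, B; split => // a' b' Aa Bb D.
exact: (sub (a', b')).
Qed.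

Lemma C_iso (G M : topologicalType) (GG : lie_type_groupoid G M) g :
  closure (comm_all GG) g -> gs GG g = gt GG g.
Proof.
move=> Cg; apply: (lg_hausM GG) => A B nA nB.
have nA' : nbhs g (gs GG @^-1` A) by apply: (@lg_cont_s _ _ GG g).
have nB' : nbhs g (gt GG @^-1` B) by apply: (@lg_cont_t _ _ GG g).
have [g' [[x _ Hx] [Ag' Bg']]] := Cg _ (filterI nA' nB').
have [e1 e2] := ics_iso Hx.
by exists (gs GG g'); split => //; rewrite e1 -e2.
Qed.

Theorem mainTheorem12 (G M : topologicalType) (GG : lie_type_groupoid G M) :
  let C := closure (comm_all GG) in
  (forall g h, C g -> C h -> gs GG g = gt GG h -> C (gmul GG g h)) ->
  (forall g, C g -> C (ginv GG g)) ->
  forall g h, C g -> gs GG h = gt GG g ->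
    C (gmul GG (gmul GG h g) (ginv GG h)).
Proof.
move=> C _ _ g h Cg shtg.
have sgtg := @C_iso _ _ GG g Cg.
case: (lg_sections_s GG h) => U [sig [oU Ux csig sigx sec]].
rewrite /C => V nV.
have sab : gs GG (gmul GG h g) = gt GG (ginv GG h) by gsolve.
have [A1 [B1 [nA1 nB1 H1]]] := mulnbhs sab nV.
have nB1' : nbhs h (ginv GG @^-1` B1) by apply: (@lg_cont_inv _ _ GG h).
have [A2 [B2 [nA2 nB2 H2]]] := mulnbhs shtg nA1.
have nW : nbhs h (A2 `&` ginv GG @^-1` B1) by apply: filterI.
have nN0 : nbhs (gs GG h) [set y | U y /\ (A2 `&` ginv GG @^-1` B1) (sig y)].
  have nW' : nbhs (sig (gs GG h)) (A2 `&` ginv GG @^-1` B1) by rewrite sigx.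
  have := (subspace_continuousP _ _).1 csig (gs GG h) Ux _ nW'.
  rewrite /= nbhs_simpl /= => nS.
  have nU : nbhs (gs GG h) U by apply: open_nbhs_nbhs.
  by apply: filterS (filterI nU nS) => y [Uy /(_ Uy)].
have nN1 : nbhs g (gt GG @^-1` [set y | U y /\ (A2 `&` ginv GG @^-1` B1) (sig y)]).
  by apply: (@lg_cont_t _ _ GG g); rewrite -shtg.
have [g' [[x _ Hx] [B2g' [Ug' [A2k B1k]]]]] := Cg _ (filterI nB2 nN1).
have [e1 e2] := ics_iso Hx.
set k := sig (gt GG g') in A2k B1k.
have sk : gs GG k = gt GG g' by rewrite /k sec.
exists (conj GG k g'); split.
  exists (gt GG k) => //; apply: ics_conj; congruence.
rewrite /conj; apply: H1 => //.
  apply: H2 => //.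
gsolve.
Qed.
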